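(* A tubal matrix $\mathcal A\in\mathbb{C}_p^{I\times I}$ is unitary if and only if its small-t transpose $\mathcal A^t$ is unitary.
   Context: Fix an integer $p\ge1$ and an invertible linear map $L:\mathbb{C}^p\to\mathbb{C}^p$. A tubal scalar is an element of $\mathbb{C}_p:=\mathbb{C}^p$. The tensor-tensor product of tubal scalars is $\mathbf a*\mathbf b=L^{-1}(L(\mathbf a)\odot L(\mathbf b))$, where $\odot$ is the componentwise product. A tubal matrix $\mathcal A\in\mathbb{C}_p^{I\times J}$ is an $I\times J$ array of tubal scalars (identified with an array in $\mathbb{C}^{I\times J\times p}$); its $k$-th frontal slice $\mathcal A^{(k)}\in\mathbb{C}^{I\times J}$ has entries $\mathcal A(i,j)^{(k)}$, and $L(\mathcal A)$ is obtained by applying $L$ to every entry. For $\mathcal A\in\mathbb{C}_p^{I\times J}$, $\mathcal B\in\mathbb{C}_p^{J\times K}$, the product $\mathcal A*\mathcal B\in\mathbb{C}_p^{I\times K}$ is defined by $(\mathcal A*\mathcal B)(i,k)=\sum_j\mathcal A(i,j)*\mathcal B(j,k)$; equivalently $L(\mathcal A*\mathcal B)^{(k)}=L(\mathcal A)^{(k)}L(\mathcal B)^{(k)}$ for all $k$. The identity $\mathcal I_I\in\mathbb{C}_p^{I\times I}$ is the tubal matrix with $L(\mathcal I_I)^{(k)}$ equal to the $I\times I$ identity matrix for every $k$. The Hermitian transpose $\mathcal A^H\in\mathbb{C}_p^{J\times I}$ is defined by $L(\mathcal A^H)^{(k)}=(L(\mathcal A)^{(k)})^H$ for all $k$. $\mathcal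 A\in\mathbb{C}_p^{I\times I}$ is unitary if $\mathcal A*\mathcal A^H=\mathcal A^H*\mathcal A=\mathcal I_I$. The small-t transpose $\mathcal A^t\in\mathbb{C}_p^{J\times I}$ is defined by $\mathcal A^t(j,i)=\mathcal A(i,j)$ (each frontal slice is transposed, without conjugation). *)

(* Defs.v *)
From mathcomp Require Import all_boot all_algebra complex reals.
Set Implicit Arguments. Unset Strict Implicit. Unset Printing Implicit Defensive.
Import GRing.Theory Num.Theory.
Local Open Scope ring_scope.

Section Tubal.
Variables (R : realType) (p : nat) (L : 'M[R[i]]_p).

Definition tube := 'cV[R[i]]_p.
Definition tmat (I J : nat) := 'M[tube]_(I, J).

Definition Lt (a : tube) : tube := L *m a.
Definition Linvt (a : tube) : tube := invmx L *m a.

Definition tprod (a b : tube) : tube :=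
  Linvt (\col_k ((Lt a) k 0 * (Lt b) k 0)).

Definition tmul I J K (A : tmat I J) (B : tmat J K) : tmat I K :=
  \matrix_(i, k) \sum_(j < J) tprod (A i j) (B j k).

(* identity: L(I)^{(k)} is the identity matrix for every k *)
Definition tid I : tmat I I :=
  \matrix_(i, j) Linvt (\col_(k < p) (i == j)%:R).

(* Hermitian transpose: L(A^H)^{(k)} = (L(A)^{(k)})^H *)
Definition tH I J (A : tmat I J) : tmat J I :=
  \matrix_(j, i) Linvt (map_mx Num.conj (Lt (A i j))).

Definition tunitary I (A : tmat I I) : Prop :=
  tmul A (tH A) = tid I /\ tmul (tH A) A = tid I.

Definition tT I J (A : tmat I J) : tmat J I := \matrix_(j, i) A i j.

End Tubal.

(* Main.v *)
Require Import Defs.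
From mathcomp Require Import all_boot all_algebra complex reals.
Import GRing.Theory Num.Theory.
Local Open Scope ring_scope.

Section Aux.
Variables (R : realType) (p : nat) (L : 'M[R[i]]_p).
Hypothesis HL : L \in unitmx.

Lemma LtK (v : tube R p) : Lt L (Linvt L v) = v.
Proof. by rewrite /Lt /Linvt mulmxA mulmxV // mul1mx. Qed.

Lemma Lt_inj : injective (Lt L).
Proof.
move=> a b h; have := congr1 (mulmx (invmx L)) h.
by rewrite /Lt !mulmxA mulVmx // !mul1mx.
Qed.

Lemma Lt_sum (J : nat) (F : 'I_J -> tube R p) :
  Lt L (\sum_j F j) = \sum_j Lt L (F j).
Proof. by rewrite /Lt mulmx_sumr. Qed.

Lemma tmul_id (I : nat) (X Y : tmat R p I I) :
  tmul L X Y = tid L I <->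
  (forall a b k, \sum_j (Lt L (X a j)) k 0 * (Lt L (Y j b)) k 0
                 = (a == b)%:R).
Proof.
split.
- move=> h a b k.
  have e : Lt L (tmul L X Y a b) = Lt L (tid L I a b) by rewrite h.
  move: e; rewrite !mxE Lt_sum LtK // => /matrixP /(_ k 0).
  rewrite summxE mxE => <-.
  by apply: eq_bigr => j _; rewrite /tprod LtK // [RHS]mxE.
- move=> h; apply/matrixP => a b; rewrite !mxE; apply: Lt_inj.
  rewrite Lt_sum LtK //; apply/matrixP => k z; rewrite ord1 summxE mxE -(h a b k).
  by apply: eq_bigr => j _; rewrite /tprod LtK // [LHS]mxE.
Qed.

Lemma Lt_tH I J (A : tmat R p I J) j a k :
  (Lt L (tH L A j a)) k 0 = Num.conj ((Lt L (A a j)) k 0).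
Proof. by rewrite [X in Lt L X]mxE LtK // mxE. Qed.

Lemma conj_delta (a b : nat) : Num.conj ((a == b)%:R : R[i]) = (a == b)%:R.
Proof. by case: (a == b); rewrite ?rmorph0 ?rmorph1. Qed.

End Aux.

Theorem proposition3p3 (R : realType) (p : nat) (L : 'M[R[i]]_p) (I : nat)
    (A : tmat R p I I) :
  (0 < p)%N -> L \in unitmx ->
  (tunitary L A <-> tunitary L (tT A)).
Proof.
move=> _ HL; rewrite /tunitary !tmul_id //.
have E1 : forall a j k, (Lt L (tT A a j)) k 0 = (Lt L (A j a)) k 0.
  by move=> a j k; rewrite [X in Lt L X]mxE.
split=> -[h1 h2]; split=> a b k.
- have := h2 a b k; under eq_bigr do rewrite Lt_tH //.
  move=> e; rewrite -(@conj_delta R) -e rmorph_sum.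
  apply: eq_bigr => j _; rewrite Lt_tH // !E1 rmorphM /= conjCK; first [done | exact: mulrC].
- have := h1 a b k; under eq_bigr do rewrite Lt_tH //.
  move=> e; rewrite -(@conj_delta R) -e rmorph_sum.
  apply: eq_bigr => j _; rewrite Lt_tH // !E1 rmorphM /= conjCK; first [done | exact: mulrC].
- have := h2 a b k; under eq_bigr do rewrite Lt_tH // !E1.
  move=> e; rewrite -(@conj_delta R) -e rmorph_sum.
  apply: eq_bigr => j _; rewrite Lt_tH // ?E1 rmorphM /= conjCK; first [done | exact: mulrC].
- have := h1 a b k; under eq_bigr do rewrite Lt_tH // !E1.
  move=> e; rewrite -(@conj_delta R) -e rmorph_sum.
  apply: eq_bigr => j _; rewrite Lt_tH // ?E1 rmorphM /= conjCK; first [done | exact: mulrC].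
Qed.
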